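(* Let $G=(V,E)$ be any finite connected undirected unweighted graph with $n$ vertices. For the $\lambda$-mixed Moran process with $\lambda=1/2$ and $r=1$, the fixation probability from any initial mutant set $S_0\subseteq V$ is exactly $|S_0|/n$.
   Context: The $\lambda$-mixed Moran process on a connected graph $G=(V,E)$ with $n=|V|\ge 2$: each vertex hosts a resident (fitness $1$) or mutant (fitness $r>0$); the state is the mutant set $S_t\subseteq V$. Each step, independently: with probability $\lambda$ a Birth-death step (a vertex $u$ chosen with probability proportional to fitness among all vertices; a uniformly random neighbor of $u$ takes $u$'s type); with probability $1-\lambda$ a death-Birth step (a uniformly random vertex $v$ dies; a neighbor $u$ of $v$ chosen with probability proportional to fitness among the neighbors of $v$; $v$ takes $u$'s type). The fixation probability from $S_0$ is the probability that the process reaches $S_t=V$. *)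

(* Defs.v *)
From HB Require Import structures.
From mathcomp Require Import all_boot all_order all_algebra.
From mathcomp Require Import all_classical all_reals topology normedtype sequences.
Set Implicit Arguments. Unset Strict Implicit. Unset Printing Implicit Defensive.
Import Order.TTheory GRing.Theory Num.Theory.
Local Open Scope ring_scope.

(* A graph is a rel e on a finType T (symmetric, irreflexive, connected are
   hypotheses of the theorem).  States are mutant sets S : {set T}. *)
Section Moran.
Variables (R : realType) (T : finType) (e : rel T).

Definition nbrs (u : T) : {set T} := [set v | e u v].

Definition fit (r : R) (S : {set T}) (u : T) : R := if u \in S then r else 1.

Definition copy_type (S : {set T}) (u v : T) : {set T} :=
  if u \in S then v |: S else S :\ v.

Definition bd_step (r : R) (S S' : {set T}) : R :=
  \sum_(u : T) \sum_(v in nbrs u)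
     (fit r S u / \sum_(w : T) fit r S w) * (#|nbrs u|%:R)^-1
     * (copy_type S u v == S')%:R.

Definition db_step (r : R) (S S' : {set T}) : R :=
  \sum_(v : T) \sum_(u in nbrs v)
     (#|T|%:R)^-1 * (fit r S u / \sum_(w in nbrs v) fit r S w)
     * (copy_type S u v == S')%:R.

Definition mixed_step (lam r : R) (S S' : {set T}) : R :=
  lam * bd_step r S S' + (1 - lam) * db_step r S S'.

Fixpoint reach_within (lam r : R) (t : nat) (S : {set T}) : R :=
  if S == [set: T] then 1 else
  match t with
  | 0 => 0
  | t'.+1 => \sum_(S' : {set T}) mixed_step lam r S S' * reach_within lam r t' S'
  end.

End Moran.

(* Main.v *)
Require Import Defs.
From HB Require Import structures.
From mathcomp Require Import all_boot all_order all_algebra.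
From mathcomp Require Import all_classical all_reals topology normedtype sequences.
From mathcomp Require Import ring.
Import Order.TTheory GRing.Theory Num.Theory numFieldNormedType.Exports.
Local Open Scope classical_set_scope.
Local Open Scope ring_scope.

Local Close Scope classical_set_scope.
Section Proof.
Variables (R : realType) (T : finType) (e : rel T).
Hypotheses (e_sym : symmetric e) (e_conn : forall x y : T, connect e x y)
  (n_ge2 : (1 < #|T|)%N).

Local Notation fset0 := (@finset.set0 T).
Let n := #|T|.
Let deg u := #|nbrs e u|.
Let a u : R := ((n * deg u)%N%:R)^-1.
Let P S S' : R := mixed_step e (2^-1) 1 S S'.

Lemma half1 : (1 - 2^-1 : R) = 2^-1.
Proof. by rewrite {1}(splitr 1) div1r addrK. Qed.

Lemma fit1 (S : {set T}) (u : T) : fit (1 : R) S u = 1.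
Proof. by rewrite /fit; case: ifP. Qed.

Lemma sum_pred1 (X : {set T}) (g : {set T} -> R) :
  \sum_(S' : {set T}) (X == S')%:R * g S' = g X.
Proof.
rewrite (bigD1 X) //= eqxx mul1r big1 ?addr0 // => S' HS'.
by rewrite eq_sym (negbTE HS') mul0r.
Qed.

Lemma crossing (S : {set T}) : S != fset0 -> S != [set: T] ->
  exists u v, [/\ u \in S, v \notin S & e u v].
Proof.
move=> S0 ST.
case: (boolP [exists u, exists v, [&& u \in S, v \notin S & e u v]]).
  by move/existsP=> [u /existsP [v /and3P [H1 H2 H3]]]; exists u, v.
move=> Hn; exfalso.
have cl : fingraph.closed e (mem S).
  apply: intro_closed; first exact: sym_connect_sym.
  move=> x y exy xS; apply/negPn/negP => yS; move/negP: Hn; apply.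
  by apply/existsP; exists x; apply/existsP; exists y; rewrite xS yS exy.
case/set0Pn: S0 => x xS; move/negP: ST; apply.
apply/eqP/setP => y; rewrite inE.
by rewrite -(closed_connect cl (e_conn x y)).
Qed.

Lemma deg_gt0 u : (0 < deg u)%N.
Proof.
have H1 : [set u] != fset0 by apply/set0Pn; exists u; rewrite inE.
have H2 : [set u] != [set: T].
  apply/negP => /eqP H.
  by move: n_ge2; rewrite -cardsT -H cards1.
have [u' [v [H1' H2' H3]]] := @crossing [set u] H1 H2.
move: H1'; rewrite inE => /eqP ?; subst u'.
by apply/card_gt0P; exists v; rewrite inE.
Qed.

Lemma n_gt0 : (0 < n)%N.
Proof. by apply: leq_trans n_ge2. Qed.

Lemma a_gt0 u : 0 < a u.
Proof. by rewrite /a invr_gt0 ltr0n muln_gt0 n_gt0 deg_gt0. Qed.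

Lemma bd_simpl S S' : bd_step e 1 S S' =
  \sum_u \sum_(v in nbrs e u) a u * (copy_type S u v == S')%:R.
Proof.
rewrite /bd_step; apply: eq_bigr => u _; apply: eq_bigr => v _.
rewrite fit1; under eq_bigr do rewrite fit1.
rewrite sumr_const.
by rewrite /a natrM invfM div1r.
Qed.

Lemma db_simpl S S' : db_step e 1 S S' =
  \sum_v \sum_(u in nbrs e v) a v * (copy_type S u v == S')%:R.
Proof.
rewrite /db_step; apply: eq_bigr => v _; apply: eq_bigr => u _.
rewrite fit1; under eq_bigr do rewrite fit1.
rewrite sumr_const.
by rewrite /a natrM invfM div1r.
Qed.

Let B (S : {set T}) (g : {set T} -> R) :=
  \sum_u \sum_(v in nbrs e u) a u * g (copy_type S u v).
Let D (S : {set T}) (g : {set T} -> R) :=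
  \sum_v \sum_(u in nbrs e v) a v * g (copy_type S u v).

Lemma Pop_eq S g : \sum_S' P S S' * g S' = 2^-1 * B S g + 2^-1 * D S g.
Proof.
rewrite /P /mixed_step half1.
under eq_bigr do rewrite mulrDl -!mulrA.
rewrite big_split /= -!mulr_sumr; congr (_ * _ + _ * _).
- under eq_bigr do rewrite bd_simpl mulr_suml.
  rewrite exchange_big /=; apply: eq_bigr => u _.
  under eq_bigr do rewrite mulr_suml.
  rewrite exchange_big /=; apply: eq_bigr => v _.
  rewrite -(sum_pred1 (copy_type S u v) (fun X => a u * g X)) /=.
  by apply: eq_bigr => X _; rewrite [RHS]mulrCA mulrA.
- under eq_bigr do rewrite db_simpl mulr_suml.
  rewrite exchange_big /=; apply: eq_bigr => v _.
  under eq_bigr do rewrite mulr_suml.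
  rewrite exchange_big /=; apply: eq_bigr => u _.
  rewrite -(sum_pred1 (copy_type S u v) (fun X => a v * g X)) /=.
  by apply: eq_bigr => X _; rewrite [RHS]mulrCA mulrA.
Qed.

Lemma P_ge0 S S' : 0 <= P S S'.
Proof.
rewrite /P /mixed_step half1 bd_simpl db_simpl.
have h0 : (0 : R) <= 2^-1 by rewrite invr_ge0 ler0n.
apply: addr_ge0; apply: mulr_ge0 => //; apply: sumr_ge0 => u _;
  apply: sumr_ge0 => v _; apply: mulr_ge0 => //; exact: ltW (a_gt0 _).
Qed.

Lemma sumB1 : \sum_u \sum_(v in nbrs e u) a u = 1.
Proof.
under eq_bigr => u _.
  rewrite sumr_const -mulr_natr /a natrM invfM divfK; last first.
    by rewrite pnatr_eq0 -lt0n deg_gt0.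
  over.
rewrite sumr_const (_ : #|_| = n); last by apply: eq_card.
by rewrite -(mulr_natr (n%:R)^-1) mulVf // pnatr_eq0 -lt0n n_gt0.
Qed.

Lemma half2 : (2^-1 + 2^-1 : R) = 1.
Proof. by rewrite [RHS](splitr 1) div1r. Qed.

Lemma Pop1 S : \sum_S' P S S' * 1 = 1.
Proof.
rewrite Pop_eq /B /D.
under eq_bigr do under eq_bigr do rewrite mulr1.
by rewrite !sumB1 !mulr1 half2.
Qed.

Let dl (S : {set T}) u v : R :=
  ((u \in S) && (v \notin S))%:R - ((u \notin S) && (v \in S))%:R.

Lemma cardcopy S u v : #|copy_type S u v|%:R = #|S|%:R + dl S u v :> R.
Proof.
rewrite /copy_type /dl; case uS: (u \in S); case vS: (v \in S) => /=.
- by rewrite cardsU1 vS /= add0n subrr addr0.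
- by rewrite cardsU1 vS /= natrD subr0 addrC.
- by rewrite [in RHS](cardsD1 v S) vS natrD /=; ring.
- by rewrite [in RHS](cardsD1 v S) vS /= add0n subrr addr0.
Qed.

Lemma dl_anti S u v : dl S u v = - dl S v u.
Proof. by rewrite /dl; case: (u \in S); case: (v \in S) => /=; ring. Qed.

Lemma sum_aff (c : R) (k : T -> T -> R) :
  \sum_u \sum_(v in nbrs e u) a u * (c + k u v) =
  c + \sum_u \sum_(v in nbrs e u) a u * k u v.
Proof.
under eq_bigr do under eq_bigr do rewrite mulrDr.
under eq_bigr do rewrite big_split /=.
rewrite big_split /=; congr (_ + _).
rewrite -[RHS]mulr1 -sumB1 mulr_sumr; apply: eq_bigr => u _.
by rewrite mulr_sumr; apply: eq_bigr => v _; rewrite mulrC.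
Qed.

Lemma harmonic S : \sum_S' P S S' * #|S'|%:R = #|S|%:R.
Proof.
rewrite Pop_eq /B /D.
under eq_bigr do under eq_bigr do rewrite cardcopy.
under [X in _ + _ * X]eq_bigr do under eq_bigr do rewrite cardcopy dl_anti.
rewrite !sum_aff.
under [X in _ + _ * (_ + X)]eq_bigr do under eq_bigr do rewrite mulrN.
under [X in _ + _ * (_ + X)]eq_bigr do rewrite sumrN.
rewrite sumrN.
set X := \sum_u _.
by rewrite -mulrDr addrACA subrr addr0 mulrDr -mulrDl half2 mul1r.
Qed.

Let c0 : R := 2^-1 * ((n * n)%N%:R)^-1.

Lemma P_lb (S : {set T}) u v : u \in S -> v \notin S -> e u v -> c0 <= P S (v |: S).
Proof.
move=> uS vS euv.
rewrite /P /mixed_step half1 bd_simpl db_simpl /c0.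
have h0 : (0 : R) <= 2^-1 by rewrite invr_ge0 ler0n.
apply: le_trans (_ : 2^-1 * a u <= _).
  apply: ler_wpM2l => //; rewrite /a lef_pV2 ?posrE ?ltr0n ?muln_gt0 ?n_gt0 ?deg_gt0 //.
  by rewrite ler_nat leq_mul2l max_card orbT.
rewrite -[X in X <= _]addr0; apply: lerD; last first.
  apply: mulr_ge0 => //; apply: sumr_ge0 => x _; apply: sumr_ge0 => y _.
  by apply: mulr_ge0 => //; exact: ltW (a_gt0 _).
apply: ler_wpM2l => //.
rewrite (bigD1 u) //= (bigD1 v) /=; last by rewrite inE.
rewrite /copy_type uS eqxx mulr1 -addrA lerDl.
apply: addr_ge0; apply: sumr_ge0 => x _; first by apply: mulr_ge0 => //; exact: ltW (a_gt0 _).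
by apply: sumr_ge0 => y _; apply: mulr_ge0 => //; exact: ltW (a_gt0 _).
Qed.


Let F t S := reach_within e (2^-1 : R) 1 t S.
Let h (S : {set T}) : R := #|S|%:R / n%:R.

Lemma F_succ t S :
  F t.+1 S = if S == [set: T] then 1 else \sum_S' P S S' * F t S'.
Proof. by []. Qed.

Lemma F0 S : F 0 S = (S == [set: T])%:R.
Proof. by rewrite /F /=; case: ifP. Qed.

Lemma F_T t : F t [set: T] = 1.
Proof. by case: t => [|t]; rewrite /F /= eqxx. Qed.

Lemma Pmono (g1 g2 : {set T} -> R) S : (forall X, g1 X <= g2 X) ->
  \sum_X P S X * g1 X <= \sum_X P S X * g2 X.
Proof. by move=> H; apply: ler_sum => X _; apply: ler_wpM2l; [exact: P_ge0|]. Qed.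

Lemma h_harm S : \sum_X P S X * h X = h S.
Proof. by under eq_bigr do rewrite /h mulrA; rewrite -mulr_suml harmonic. Qed.

Lemma Plin (M : R) (g : {set T} -> R) S :
  \sum_X P S X * (M * (1 - g X)) = M * (1 - \sum_X P S X * g X).
Proof.
transitivity (M * \sum_X P S X * (1 - g X)).
  by rewrite mulr_sumr; apply: eq_bigr => X _; rewrite mulrCA.
by under eq_bigr do rewrite mulrBr; rewrite sumrB Pop1.
Qed.

Lemma F_ge0 t S : 0 <= F t S.
Proof.
elim: t S => [|t IH] S; first by rewrite F0 ler0n.
rewrite F_succ; case: ifP => _; first exact: ler01.
by apply: sumr_ge0 => X _; apply: mulr_ge0; [exact: P_ge0|exact: IH].
Qed.

Lemma hT : h [set: T] = 1.
Proof. by rewrite /h cardsT divff // pnatr_eq0 -lt0n n_gt0. Qed.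

Lemma h_ge0 S : 0 <= h S.
Proof. by rewrite /h divr_ge0 ?ler0n. Qed.

Lemma h_le1 S : h S <= 1.
Proof. by rewrite /h ler_pdivrMr ?ltr0n ?n_gt0 // mul1r ler_nat max_card. Qed.

Lemma F_le_h t S : F t S <= h S.
Proof.
elim: t S => [|t IH] S.
  by rewrite F0; case: eqP => [->|_]; rewrite ?hT // h_ge0.
rewrite F_succ; case: eqP => [->|_]; first by rewrite hT.
by rewrite -h_harm; apply: Pmono => X; apply: IH.
Qed.

Lemma c0_gt0 : 0 < c0.
Proof. by rewrite /c0 mulr_gt0 // invr_gt0 ltr0n // muln_gt0 n_gt0. Qed.

Lemma c0_le1 : c0 <= 1.
Proof.
rewrite /c0 mulr_ile1 ?invr_ge0 ?ler0n // invf_le1 ?ltr0n ?muln_gt0 ?n_gt0 //.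
  by rewrite ler1n.
by rewrite ler1n muln_gt0 n_gt0.
Qed.

Lemma F_lb k S : S != fset0 -> (#|~: S| <= k)%N -> c0 ^+ k <= F k S.
Proof.
elim: k S => [|k IH] S S0 Hk.
  have E : ~: S = fset0 by apply/eqP; rewrite -cards_eq0 -leqn0.
  by rewrite -(finset.setCK S) E finset.setC0 F_T expr0.
case ST: (S == [set: T]).
  by rewrite F_succ ST exprn_ile1 // ?c0_le1 // ltW // c0_gt0.
have [u [v [uS vS euv]]] := @crossing S S0 (negbT ST).
rewrite F_succ ST.
apply: le_trans (_ : P S (v |: S) * F k (v |: S) <= _).
  rewrite exprS; apply: ler_pM.
  - exact: ltW c0_gt0.
  - exact: exprn_ge0 (ltW c0_gt0).
  - exact: (@P_lb S u v uS vS euv).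
  apply: IH; first by apply/set0Pn; exists v; rewrite setU11.
  move: Hk; rewrite (cardsD1 v (~: S)) inE vS add1n ltnS.
  suff -> : ~: S :\ v = ~: (v |: S) by [].
  by apply/setP => x; rewrite !inE negb_or.
rewrite (bigD1 (v |: S)) //= lerDl.
by apply: sumr_ge0 => X _; apply: mulr_ge0; [exact: P_ge0|exact: F_ge0].
Qed.

Lemma step t (M : R) : (forall S, h S - F t S <= M) ->
  forall k S, h S - F (t + k) S <= M * (1 - F k S).
Proof.
move=> HM k; elim: k => [|k IH] S.
  rewrite addn0 F0; case: eqP => [->|_]; first by rewrite F_T hT !subrr mulr0.
  by rewrite subr0 mulr1.
rewrite addnS !F_succ; case: eqP => [->|_]; first by rewrite hT !subrr mulr0.
rewrite -Plin -{1}(h_harm S) -sumrB; apply: ler_sum => X _.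
by rewrite -mulrBr; apply: ler_wpM2l; [exact: P_ge0|exact: IH].
Qed.

Let dd := c0 ^+ n.

Lemma dd_le1 : dd <= 1.
Proof. by rewrite /dd exprn_ile1 // ?c0_le1 // ltW // c0_gt0. Qed.

Lemma geo j k S : h S - F (j * n + k) S <= (1 - dd) ^+ j.
Proof.
have hd : 0 <= 1 - dd by rewrite subr_ge0 dd_le1.
elim: j k S => [|j IH] k S.
  by rewrite mul0n add0n expr0; apply: le_trans (h_le1 S); rewrite gerBl F_ge0.
have -> : (j.+1 * n + k = (j * n + k) + n)%N by rewrite mulSnr addnAC.
have := @step (j * n + k) ((1 - dd) ^+ j) (IH k) n S.
case S0: (S == fset0).
  move/eqP: S0 => -> _.
  rewrite /h cards0 mul0r sub0r; apply: le_trans (_ : 0 <= _).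
    by rewrite oppr_le0 F_ge0.
  exact: exprn_ge0.
move=> H; apply: le_trans H _; rewrite exprSr; apply: ler_wpM2l.
  exact: exprn_ge0.
by rewrite lerB // F_lb ?S0 // max_card.
Qed.

Local Open Scope classical_set_scope.
Lemma final S0 : (fun t => F t S0) @ \oo --> h S0.
Proof.
apply/cvgrPdist_le => eps eps_gt0.
have hz : `|1 - dd| < 1.
  rewrite ger0_norm ?subr_ge0 ?dd_le1 // gtrBl.
  exact: exprn_gt0 c0_gt0.
have := cvg_expr hz; move/cvgrPdist_le => /(_ eps eps_gt0).
rewrite /prop_near1 /nbhs /= => -[J _ HJ].
exists (J * n)%N => // t /= Ht.
have HJt : (J <= t %/ n)%N by rewrite leq_divRL // n_gt0.
have := HJ _ HJt; rewrite /= sub0r normrN ger0_norm ?exprn_ge0 ?subr_ge0 ?dd_le1 // => Hp.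
have := geo (t %/ n) (t %% n) S0; rewrite -divn_eq => Hg.
rewrite ger0_norm ?subr_ge0 ?F_le_h //.
exact: le_trans Hg Hp.
Qed.

End Proof.

Local Open Scope classical_set_scope.

Theorem mainTheorem4 (R : realType) (T : finType) (e : rel T)
  (e_sym : symmetric e) (e_irr : irreflexive e)
  (e_conn : forall x y : T, connect e x y) (n_ge2 : (1 < #|T|)%N)
  (S0 : {set T}) :
  (fun t : nat => reach_within e (2^-1 : R) 1 t S0) @ \oo -->
    (#|S0|%:R / #|T|%:R : R).
Proof.
exact: (@final R T e e_sym e_conn n_ge2 S0).
Qed.
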